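(* Let $(\Omega,\mathcal F)$ be a measurable space, $\mathcal X$ the set of bounded measurable functions on it, $W$ a nonempty set of capacities, $V$ a nonempty set of binary capacities, and $\alpha\in(0,1)$. Define pointwise on $\mathcal F$: $\overline w=\sup_{w\in W}w$, $\underline w=\inf_{w\in W}w$, $\overline v=\sup_{v\in V}v$, $\underline v=\inf_{v\in V}v$. Then, as functions on $\mathcal X$, $$\sup_{w\in W}Q^w_\alpha=Q^{\overline w}_\alpha,\qquad \sup_{v\in V}I_v=I_{\overline v},\qquad \inf_{w\in W}\overline Q^w_\alpha=\overline Q^{\underline w}_\alpha,\qquad \inf_{v\in V}I_v=I_{\underline v}.$$
   Context: A capacity is an increasing function $w:\mathcal F\to\mathbb R$ (i.e. $w(A)\le w(B)$ for $A\subseteq B$) with $w(\varnothing)=0$, $w(\Omega)=1$; it is binary if it takes values in $\{0,1\}$. For a capacity $w$, $I_w(X)=\int X\,\mathrm dw=\int_{-\infty}^0(w(X\ge x)-1)\,\mathrm dx+\int_0^\infty w(X\ge x)\,\mathrm dx$ for $X\in\mathcal X$. For a capacity $w$: $Q^w_\alpha(X)=\inf\{x\in\mathbb R: w(X\ge x)\le 1-\alpha\}$ and $\overline Q^w_\alpha(X)=\inf\{x\in\mathbb R: w(X\ge x)<1-\alpha\}$. *)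

(* Defs.v *)
From HB Require Import structures.
From mathcomp Require Import all_boot all_order all_algebra.
From mathcomp Require Import all_classical all_reals all_analysis.
Set Implicit Arguments. Unset Strict Implicit. Unset Printing Implicit Defensive.
Import Order.TTheory GRing.Theory Num.Theory.
Local Open Scope classical_set_scope.
Local Open Scope ring_scope.

Section Defs.
Context {d : measure_display} {T : measurableType d} {R : realType}.

(* A capacity: a set function, increasing on F, w(empty)=0, w(Omega)=1.
   Only its values on measurable sets (the sigma-algebra F) matter. *)
Definition capacity (w : set T -> R) : Prop :=
  [/\ w set0 = 0, w setT = 1 &
      forall A B, measurable A -> measurable B -> A `<=` B -> w A <= w B].

Definition binary_capacity (w : set T -> R) : Prop :=
  capacity w /\ forall A, measurable A -> w A = 0 \/ w A = 1.

Definition bounded_measurable (X : T -> R) : Prop :=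
  measurable_fun setT X /\ exists M : R, forall t, `|X t| <= M.

Definition geset (X : T -> R) (x : R) : set T := [set t | x <= X t].

Definition choquet (w : set T -> R) (X : T -> R) : \bar R :=
  (\int[lebesgue_measure]_(x in `]-oo, 0%R[) ((w (geset X x) - 1)%:E)
   + \int[lebesgue_measure]_(x in `[0%R, +oo[) ((w (geset X x))%:E))%E.

Definition lquant (w : set T -> R) (alpha : R) (X : T -> R) : R :=
  inf [set x : R | w (geset X x) <= 1 - alpha].

Definition uquant (w : set T -> R) (alpha : R) (X : T -> R) : R :=
  inf [set x : R | w (geset X x) < 1 - alpha].

Definition supcap (W : set (set T -> R)) : set T -> R :=
  fun A => sup [set w A | w in W].
Definition infcap (W : set (set T -> R)) : set T -> R :=
  fun A => inf [set w A | w in W].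

End Defs.

(* Main.v *)
Require Import Defs.
From HB Require Import structures.
From mathcomp Require Import all_boot all_order all_algebra.
From mathcomp Require Import all_classical all_reals all_analysis.
From mathcomp Require Import lra.
Import Order.TTheory GRing.Theory Num.Theory.
Local Open Scope classical_set_scope.
Local Open Scope ring_scope.

Lemma meas_sq (R : realType) (B : set R) (a b : R) l r :
  [set` Interval (BSide l a) (BSide r b)] `<=` B ->
  B `<=` [set` `[a, b]] -> measurable B ->
  lebesgue_measure B = (if a < b then (b - a)%:E else 0%E).
Proof.
move=> h1 h2 mB; apply/eqP; rewrite eq_le; apply/andP; split.
- apply: (le_trans (le_measure lebesgue_measure _ _ h2)); rewrite ?inE //.
  have := lebesgue_measure_itv `[a, b]; rewrite /= lte_fin => ->.
  by case: ltP => //.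
- apply: (le_trans _ (le_measure lebesgue_measure _ _ h1)); rewrite ?inE //.
  have := lebesgue_measure_itv (Interval (BSide l a) (BSide r b)); rewrite /= => ->.
  case: ltP => ab.
    by clear h1; case: l; case: r; rewrite /= ?lte_fin ?ab ?bnd_simp ?sube0 ?subr0.
  by case: ifP => // H; rewrite -EFinD lee_fin subr_ge0 ltW.
Qed.

Lemma choq_ind (R : realType) (A : set R) (c : R) :
  [set` `]-oo, c[] `<=` A -> A `<=` [set` `]-oo, c]] ->
  (\int[lebesgue_measure]_(x in `]-oo, 0%R[) ((\1_A x - 1)%:E)
   + \int[lebesgue_measure]_(x in `[0%R, +oo[) ((\1_A x)%:E))%E = c%:E.
Proof.
move=> h1 h2.
have mA : measurable A.
  have [Ac|Ac] := pselect (A c).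
    suff -> : A = [set` `]-oo, c]] by [].
    apply/seteqP; split => // x /=; rewrite in_itv /= le_eqVlt.
    by case/orP => [/eqP -> //|xc]; apply: h1; rewrite /= in_itv.
  suff -> : A = [set` `]-oo, c[] by [].
  apply/seteqP; split => // x Ax /=; rewrite in_itv /=.
  have := h2 x Ax; rewrite /= in_itv /= le_eqVlt.
  by case/orP => // /eqP xc; rewrite xc in Ax.
have -> : (\int[lebesgue_measure]_(x in `]-oo, 0%R[) ((\1_A x - 1)%:E) =
    \int[lebesgue_measure]_(x in `]-oo, 0%R[) (- (\1_(~` A) x)%:E))%E.
  apply: eq_integral => x _; rewrite indicC /indic /=.
  by case: (x \in A); rewrite /= ?subrr ?sub0r ?oppr0.
rewrite (@integral_ge0N _ _ _ lebesgue_measure _ (fun x => (\1_(~` A) x)%:E)); last by move=> x _; rewrite lee_fin.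
rewrite !integral_indic //; last exact: measurableC.
have key : forall a b : \bar R, a = (if c < 0 then (0 - c)%:E else 0%E) ->
    b = (if 0 < c then (c - 0)%:E else 0%E) -> (- a + b)%E = c%:E.
  move=> a b -> ->; case: (ltgtP c 0) => c0.
  - by rewrite adde0 -EFinN sub0r opprK.
  - by rewrite oppe0 add0e subr0.
  - by rewrite oppe0 add0e c0.
apply: key.
  apply: (@meas_sq _ _ c 0 false true).
  - move=> x /=; rewrite in_itv /= => /andP[cx x0]; split; last by rewrite /= in_itv /= x0.
    by move=> /h2; rewrite /= in_itv /= leNgt cx.
  - move=> x [/= nA]; rewrite !in_itv /= => x0; rewrite (ltW x0) andbT.
    by rewrite leNgt; apply/negP => xc; apply: nA; apply: h1; rewrite /= in_itv /= xc.
  - by apply: measurableI => //; exact: measurableC.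
apply: (@meas_sq _ _ 0 c true true).
- move=> x /=; rewrite in_itv /= => /andP[x0 xc]; split; first by apply: h1; rewrite /= in_itv /= xc.
  by rewrite /= in_itv /= x0.
- move=> x [/h2]; rewrite /= !in_itv /= => -> /andP[-> _] //.
- exact: measurableI.
Qed.

Section SetLemmas.
Variables (R : realType) (I : Type) (P : set I) (F : I -> set R).

Lemma Lsup_union (B : R) : P !=set0 -> (forall i, P i -> F i !=set0) ->
  (forall i x, P i -> F i x -> x <= B) ->
  sup [set x | exists2 i, P i & F i x] = sup [set sup (F i) | i in P].
Proof.
move=> [i0 Pi0] ne ub.
have hsF : forall i, P i -> has_sup (F i).
  by move=> i Pi; split; [exact: ne | exists B => x; exact: ub].
have neS : [set x | exists2 i, P i & F i x] !=set0.
  by case: (ne _ Pi0) => x Fx; exists x; exists i0.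
have hsT : has_sup [set sup (F i) | i in P].
  split; first by exists (sup (F i0)); exists i0.
  exists B => _ [i Pi <-]; apply: ge_sup; first exact: ne.
  by move=> x; exact: ub.
apply/eqP; rewrite eq_le; apply/andP; split.
- apply: ge_sup => // x [i Pi Fx].
  apply: (le_trans (sup_upper_bound (hsF i Pi) Fx)).
  by apply: sup_upper_bound => //; exists i.
- apply: ge_sup; first by case: hsT.
  move=> _ [i Pi <-]; apply: ge_sup; first exact: ne.
  move=> x Fx; apply: sup_upper_bound; last by exists i.
  by split => //; exists B => y [j Pj Fy]; exact: ub Fy.
Qed.

Lemma Linf_union (B : R) : P !=set0 -> (forall i, P i -> F i !=set0) ->
  (forall i x, P i -> F i x -> B <= x) ->
  inf [set x | exists2 i, P i & F i x] = inf [set inf (F i) | i in P].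
Proof.
move=> [i0 Pi0] ne lb.
have hsF : forall i, P i -> has_inf (F i).
  by move=> i Pi; split; [exact: ne | exists B => x; exact: lb].
have neS : [set x | exists2 i, P i & F i x] !=set0.
  by case: (ne _ Pi0) => x Fx; exists x; exists i0.
have hsT : has_inf [set inf (F i) | i in P].
  split; first by exists (inf (F i0)); exists i0.
  exists B => _ [i Pi <-]; apply: lb_le_inf; first exact: ne.
  by move=> x; exact: lb.
apply/eqP; rewrite eq_le; apply/andP; split.
- apply: lb_le_inf; first by case: hsT.
  move=> _ [i Pi <-]; apply: lb_le_inf; first exact: ne.
  move=> x Fx; apply: ge_inf; last by exists i.
  by exists B => y [j Pj Fy]; exact: lb Fy.
- apply: lb_le_inf => // x [i Pi Fx].
  apply: (le_trans _ (ge_inf (proj2 (hsF i Pi)) Fx)).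
  by apply: ge_inf; [case: hsT | exists i].
Qed.

Lemma Linf_inter (B z : R) : P !=set0 ->
  (forall i x y, P i -> x <= y -> F i x -> F i y) ->
  (forall i x, P i -> F i x -> B <= x) ->
  (forall i, P i -> F i z) ->
  inf [set x | forall i, P i -> F i x] = sup [set inf (F i) | i in P].
Proof.
move=> [i0 Pi0] up lb com.
have hiF : forall i, P i -> has_inf (F i).
  by move=> i Pi; split; [exists z; exact: com | exists B => x; exact: lb].
have neS : [set x | forall i, P i -> F i x] !=set0 by exists z.
have hiS : has_inf [set x | forall i, P i -> F i x].
  by split => //; exists B => x Fx; exact: lb (Fx _ Pi0).
have hsT : has_sup [set inf (F i) | i in P].
  split; first by exists (inf (F i0)); exists i0.
  by exists z => _ [i Pi <-]; exact: (ge_inf (proj2 (hiF i Pi)) (com i Pi)).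
apply/eqP; rewrite eq_le; apply/andP; split.
- apply/ler_addgt0Pr => e e0.
  apply: ge_inf; first by case: hiS.
  move=> i Pi.
  have [u Fu ult] : exists2 u, F i u & u < inf (F i) + (sup [set inf (F i) | i in P] + e - inf (F i)).
    apply: inf_adherent (hiF i Pi).
    rewrite subr_gt0; apply: (le_lt_trans (sup_upper_bound hsT _)); first by exists i.
    by rewrite ltrDl.
  apply: up Fu => //; apply: ltW; move: ult; by rewrite addrC subrK.
- apply: lb_le_inf => // x Fx; apply: ge_sup; first by case: hsT.
  by move=> _ [i Pi <-]; exact: (ge_inf (proj2 (hiF i Pi)) (Fx i Pi)).
Qed.

Lemma Lsup_inter (B z : R) : P !=set0 ->
  (forall i x y, P i -> x <= y -> F i y -> F i x) ->
  (forall i x, P i -> F i x -> x <= B) ->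
  (forall i, P i -> F i z) ->
  sup [set x | forall i, P i -> F i x] = inf [set sup (F i) | i in P].
Proof.
move=> [i0 Pi0] dn ub com.
have hsF : forall i, P i -> has_sup (F i).
  by move=> i Pi; split; [exists z; exact: com | exists B => x; exact: ub].
have neS : [set x | forall i, P i -> F i x] !=set0 by exists z.
have hsS : has_sup [set x | forall i, P i -> F i x].
  by split => //; exists B => x Fx; exact: ub (Fx _ Pi0).
have hiT : has_inf [set sup (F i) | i in P].
  split; first by exists (sup (F i0)); exists i0.
  by exists z => _ [i Pi <-]; exact: (sup_upper_bound (hsF i Pi) (com i Pi)).
apply/eqP; rewrite eq_le; apply/andP; split.
- apply: ge_sup => // x Fx; apply: lb_le_inf; first by case: hiT.
  by move=> _ [i Pi <-]; exact: (sup_upper_bound (hsF i Pi) (Fx i Pi)).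
- apply/ler_addgt0Pr => e e0.
  rewrite -lerBlDr; apply: sup_upper_bound => // i Pi.
  have [u Fu ugt] : exists2 u, F i u & sup (F i) - (sup (F i) - (inf [set sup (F i) | i in P] - e)) < u.
    apply: sup_adherent (hsF i Pi).
    rewrite subr_gt0; apply: (lt_le_trans _ (ge_inf (proj2 hiT) _)); last by exists i.
    by rewrite gtrDl oppr_lt0.
  apply: dn Fu => //; apply: ltW; move: ugt; by rewrite opprB addrC subrK.
Qed.
End SetLemmas.

Lemma choq_bin (R : realType) (g : R -> R) (M : R) :
  (forall x, g x = 0 \/ g x = 1) ->
  (forall x y, x <= y -> g y = 1 -> g x = 1) ->
  (forall x, x <= - M -> g x = 1) ->
  (forall x, M < x -> g x = 0) ->
  (\int[lebesgue_measure]_(x in `]-oo, 0%R[) ((g x - 1)%:E)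
   + \int[lebesgue_measure]_(x in `[0%R, +oo[) ((g x)%:E))%E
  = (sup [set x | g x = 1])%:E.
Proof.
move=> g01 gdn g1 g0.
set S := [set x | g x = 1].
have hS : has_sup S.
  split; first by exists (- M); apply: g1.
  exists M => x Sx; rewrite leNgt; apply/negP => Mx.
  by have := g0 _ Mx; rewrite Sx => /eqP; rewrite oner_eq0.
have gE : g = \1_S.
  apply: funext => x; rewrite /indic.
  case: (pselect (S x)) => Sx; first by rewrite mem_set.
  rewrite memNset //=; case: (g01 x) => // gx.
have H := @choq_ind R S (sup S).
rewrite -gE in H; apply: H.
- move=> x /=; rewrite in_itv /= => xs.
  have [s Ss lt] : exists2 s, S s & sup S - (sup S - x) < s.
    by apply: sup_adherent hS; rewrite subr_gt0.
  idtac.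
  apply: (gdn x s) => //; apply: ltW.
  by move: lt; rewrite opprB addrC subrK.
- by move=> x Sx; rewrite /= in_itv /=; exact: sup_upper_bound.
Qed.

Section Cap.
Context {d : measure_display} {T : measurableType d} {R : realType}.
Implicit Types (w v : set T -> R) (X : T -> R).

Lemma geset_meas X x : measurable_fun setT X -> measurable (geset X x).
Proof.
move=> mX; have := mX measurableT _ (measurable_itv `[x, +oo[).
rewrite setTI; congr measurable; apply/seteqP; split => t /=;
  by rewrite in_itv /= andbT.
Qed.

Lemma geset_T X (M x : R) : (forall t, `|X t| <= M) -> x <= - M -> geset X x = setT.
Proof.
move=> hM xM; apply/seteqP; split => // t _ /=.
apply: (le_trans xM); have := hM t; rewrite ler_norml => /andP[] //.
Qed.

Lemma geset_0 X (M x : R) : (forall t, `|X t| <= M) -> M < x -> geset X x = set0.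
Proof.
move=> hM xM; apply/seteqP; split => // t /= xt.
have := le_trans (ler_norm (X t)) (hM t).
by rewrite leNgt (lt_le_trans xM xt).
Qed.

Lemma geset_mono X (x y : R) : x <= y -> geset X y `<=` geset X x.
Proof. by move=> xy t /=; apply: le_trans. Qed.

Lemma cap_bnd w A : capacity w -> measurable A -> 0 <= w A <= 1.
Proof.
case=> w0 w1 wm mA; apply/andP; split.
  by rewrite -w0; apply: wm => //.
by rewrite -w1; apply: wm => //.
Qed.


Lemma choquet_gen w X (M : R) : bounded_measurable X ->
  (forall t, `|X t| <= M) ->
  (forall x, w (geset X x) = 0 \/ w (geset X x) = 1) ->
  (forall x y, x <= y -> w (geset X y) = 1 -> w (geset X x) = 1) ->
  (forall x, x <= - M -> w (geset X x) = 1) ->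
  (forall x, M < x -> w (geset X x) = 0) ->
  choquet w X = (sup [set x | w (geset X x) = 1])%:E.
Proof.
move=> _ hM h01 hdn w1 w0.
exact: (@choq_bin R (fun x => w (geset X x)) M).
Qed.

End Cap.
Arguments cap_bnd {d T R w A}.

Theorem proposition3 (d : measure_display) (T : measurableType d) (R : realType)
    (W V : set (set T -> R)) (alpha : R) :
  W !=set0 -> (forall w, W w -> capacity w) ->
  V !=set0 -> (forall v, V v -> binary_capacity v) ->
  0 < alpha < 1 ->
  forall X : T -> R, bounded_measurable X ->
    [/\ sup [set lquant w alpha X | w in W] = lquant (supcap W) alpha X,
        ereal_sup [set choquet v X | v in V] = choquet (supcap V) X,
        inf [set uquant w alpha X | w in W] = uquant (infcap W) alpha X &
        ereal_inf [set choquet v X | v in V] = choquet (infcap V) X].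
Proof.
move=> [w0 Ww0] Wcap [v0 Vv0] Vbin /andP[a0 a1] X hX.
have [mX [M hM]] := hX.
have mG : forall x, measurable (geset X x) by move=> x; exact: geset_meas.
have GT : forall x, x <= - M -> geset X x = setT by move=> x; exact: geset_T.
have G0 : forall x, M < x -> geset X x = set0 by move=> x; exact: geset_0.
have Vcap : forall v, V v -> capacity v by move=> v /Vbin [].
have v01 : forall v x, V v -> v (geset X x) = 0 \/ v (geset X x) = 1.
  by move=> v x /Vbin [_]; apply.
have vdn : forall v x y, V v -> x <= y -> v (geset X y) = 1 -> v (geset X x) = 1.
  move=> v x y Vv xy vy; have /andP[_ le1] := cap_bnd (Vcap v Vv) (mG x).
  apply/eqP; rewrite eq_le le1 /= -vy.
  by case: (Vcap v Vv) => _ _ vm; apply: vm => //; exact: geset_mono.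
have vT : forall v x, V v -> x <= - M -> v (geset X x) = 1.
  by move=> v x Vv xM; rewrite GT //; case: (Vcap v Vv).
have vZ : forall v x, V v -> M < x -> v (geset X x) = 0.
  by move=> v x Vv xM; rewrite G0 //; case: (Vcap v Vv).
have Sub : forall v x, V v -> v (geset X x) = 1 -> x <= M.
  move=> v x Vv; rewrite leNgt; case: ltP => // Mx; rewrite vZ //.
  by move/eqP; rewrite eq_sym oner_eq0.
have Sne : forall v, V v -> [set x | v (geset X x) = 1] !=set0.
  by move=> v Vv; exists (- M); apply: vT.
have chv : forall v, V v -> choquet v X = (sup [set x | v (geset X x) = 1])%:E.
  move=> v Vv; apply: (choquet_gen v X M) => //.
  - by move=> x; exact: v01.
  - by move=> x y; exact: vdn.
  - by move=> x; exact: vT.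
  - by move=> x; exact: vZ.
have imE : forall (f : (set T -> R) -> \bar R) (g : (set T -> R) -> R),
    (forall v, V v -> f v = (g v)%:E) ->
    [set f v | v in V] = [set x%:E | x in [set g v | v in V]].
  move=> f g fg; apply/seteqP; split => _ [v Vv <-].
    by exists (g v); [exists v | rewrite fg].
  by move: Vv => [u Vu <-]; exists u => //; rewrite fg.
have hub : has_ubound [set sup [set x | v (geset X x) = 1] | v in V].
  exists M => _ [v Vv <-]; apply: ge_sup; first exact: Sne.
  by move=> x; exact: Sub.
have hlb : has_lbound [set sup [set x | v (geset X x) = 1] | v in V].
  exists (- M) => _ [v Vv <-]; apply: sup_upper_bound; last by apply: vT.
  split; first exact: Sne.
  by exists M => x; exact: Sub.
have neI : [set sup [set x | v (geset X x) = 1] | v in V] !=set0.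
  by exists (sup [set x | v0 (geset X x) = 1]); exists v0.
split.
-
  rewrite /lquant.
  have hsW : forall A, measurable A -> has_sup [set w A | w in W].
    move=> A mA; split; first by exists (w0 A); exists w0.
    exists 1 => _ [w Ww <-]; by have /andP[] := cap_bnd (Wcap w Ww) mA.
  have -> : [set x | supcap W (geset X x) <= 1 - alpha] =
            [set x | forall w, W w -> w (geset X x) <= 1 - alpha].
    apply/seteqP; split => x /= hx.
      move=> w Ww; apply: le_trans hx; apply: sup_upper_bound; first exact: hsW.
      by exists w.
    rewrite /supcap; apply: ge_sup; first by exists (w0 (geset X x)); exists w0.
    by move=> _ [w Ww <-]; exact: hx.
  symmetry; apply: (@Linf_inter R _ W (fun w => [set x | w (geset X x) <= 1 - alpha]) (- M) (M + 1)).
  + by exists w0.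
  + move=> w x y Ww xy /= hx; apply: le_trans hx.
    by case: (Wcap w Ww) => _ _ wm; apply: wm => //; exact: geset_mono.
  + move=> w x Ww /= hx; rewrite leNgt; apply/negP => xM; move: hx.
    rewrite GT; last exact: ltW.
    case: (Wcap w Ww) => _ -> _ h; lra.
  + move=> w Ww /=; rewrite G0; last by rewrite ltrDl.
    case: (Wcap w Ww) => -> _ _.
    by rewrite subr_ge0 ltW.
-
  rewrite (imE _ _ chv) ereal_sup_EFin //.
  have sv : forall x, (supcap V (geset X x) = 1 /\ exists2 v, V v & v (geset X x) = 1) \/
                      (supcap V (geset X x) = 0 /\ forall v, V v -> v (geset X x) = 0).
    move=> x.
    have hs : has_sup [set v (geset X x) | v in V].
      split; first by exists (v0 (geset X x)); exists v0.
      exists 1 => _ [v Vv <-]; by have /andP[] := cap_bnd (Vcap v Vv) (mG x).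
    case: (pselect (exists2 v, V v & v (geset X x) = 1)) => [[v Vv v1]|nv].
      left; split; last by exists v.
      apply/eqP; rewrite eq_le; apply/andP; split.
        apply: ge_sup; first by case: hs.
        by move=> _ [u Vu <-]; have /andP[] := cap_bnd (Vcap u Vu) (mG x).
      by rewrite -v1; apply: sup_upper_bound => //; exists v.
    have all0 : forall v, V v -> v (geset X x) = 0.
      move=> v Vv; case: (v01 v x Vv) => // v1; exfalso; apply: nv; by exists v.
    right; split => //.
    apply/eqP; rewrite eq_le; apply/andP; split.
      apply: ge_sup; first by case: hs.
      by move=> _ [u Vu <-]; rewrite all0.
    by rewrite -(all0 v0 Vv0); apply: sup_upper_bound => //; exists v0.
  have one0 : (1 : R) <> 0 by move/eqP; rewrite oner_eq0.
  have sv1 : forall x, supcap V (geset X x) = 1 <-> exists2 v, V v & v (geset X x) = 1.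
    move=> x; case: (sv x) => [[-> ex]|[-> all0]]; split => //.
      by move/esym/one0.
    by move=> [v Vv]; rewrite all0.
  rewrite (@choquet_gen _ _ _ _ _ M) //.
  + congr EFin.
    have -> : [set x | supcap V (geset X x) = 1] =
              [set x | exists2 v, V v & [set x | v (geset X x) = 1] x].
      by apply/seteqP; split => x /= /sv1.
    symmetry; apply: (@Lsup_union R _ V (fun v => [set x | v (geset X x) = 1]) M).
    * by exists v0.
    * exact: Sne.
    * by move=> v x Vv; exact: Sub.
  + by move=> x; case: (sv x) => [[-> _]|[-> _]]; [right|left].
  + move=> x y xy /sv1 [v Vv vy]; apply/sv1; exists v => //; exact: (vdn v x y).
  + by move=> x xM; apply/sv1; exists v0 => //; exact: vT.
  + move=> x xM; case: (sv x) => [[_ [v Vv]]|[-> //]].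
    by rewrite vZ // => /esym/one0.
-
  rewrite /uquant.
  have hiW : forall A, measurable A -> has_inf [set w A | w in W].
    move=> A mA; split; first by exists (w0 A); exists w0.
    exists 0 => _ [w Ww <-]; by have /andP[] := cap_bnd (Wcap w Ww) mA.
  have -> : [set x | infcap W (geset X x) < 1 - alpha] =
      [set x | exists2 w, W w & [set x | w (geset X x) < 1 - alpha] x].
    apply/seteqP; split => x /= hx.
      case: (pselect (exists2 w, W w & w (geset X x) < 1 - alpha)) => // nw; exfalso.
      have : 1 - alpha <= infcap W (geset X x).
        apply: lb_le_inf; first by exists (w0 (geset X x)); exists w0.
        move=> _ [w Ww <-]; rewrite leNgt; apply/negP => h; apply: nw; by exists w.
      by rewrite leNgt hx.
    case: hx => w Ww hw; apply: le_lt_trans hw; rewrite /infcap.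
    by apply: ge_inf; [exact: (proj2 (hiW _ (mG x))) | exists w].
  symmetry; apply: (@Linf_union R _ W (fun w => [set x | w (geset X x) < 1 - alpha]) (- M)).
  + by exists w0.
  + move=> w Ww; exists (M + 1) => /=; rewrite G0; last by rewrite ltrDl.
    case: (Wcap w Ww) => -> _ _; lra.
  + move=> w x Ww /= hx; rewrite leNgt; apply/negP => xM; move: hx.
    rewrite GT; last exact: ltW.
    case: (Wcap w Ww) => _ -> _ h; lra.
-
  rewrite (imE _ _ chv) ereal_inf_EFin //.
  have one0 : (1 : R) <> 0 by move/eqP; rewrite oner_eq0.
  have si : forall x, (infcap V (geset X x) = 1 /\ forall v, V v -> v (geset X x) = 1) \/
                      (infcap V (geset X x) = 0 /\ exists2 v, V v & v (geset X x) = 0).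
    move=> x.
    have hi : has_inf [set v (geset X x) | v in V].
      split; first by exists (v0 (geset X x)); exists v0.
      exists 0 => _ [v Vv <-]; by have /andP[] := cap_bnd (Vcap v Vv) (mG x).
    case: (pselect (exists2 v, V v & v (geset X x) = 0)) => [[v Vv vz]|nv].
      right; split; last by exists v.
      apply/eqP; rewrite eq_le; apply/andP; split.
        by rewrite -vz; apply: ge_inf; [case: hi | exists v].
      apply: lb_le_inf; first by case: hi.
      by move=> _ [u Vu <-]; have /andP[] := cap_bnd (Vcap u Vu) (mG x).
    have all1 : forall v, V v -> v (geset X x) = 1.
      move=> v Vv; case: (v01 v x Vv) => // vz; exfalso; apply: nv; by exists v.
    left; split => //.
    apply/eqP; rewrite eq_le; apply/andP; split.
      by rewrite -(all1 v0 Vv0); apply: ge_inf; [case: hi | exists v0].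
    apply: lb_le_inf; first by case: hi.
    by move=> _ [u Vu <-]; rewrite all1.
  have si1 : forall x, infcap V (geset X x) = 1 <-> forall v, V v -> v (geset X x) = 1.
    move=> x; case: (si x) => [[-> all1]|[-> [v Vv vz]]]; split => //.
      by move/esym/one0.
    by move=> h; have := h v Vv; rewrite vz => /esym/one0.
  rewrite (@choquet_gen _ _ _ _ _ M) //.
  + congr EFin.
    have -> : [set x | infcap V (geset X x) = 1] =
              [set x | forall v, V v -> [set x | v (geset X x) = 1] x].
      by apply/seteqP; split => x /= /si1.
    symmetry; apply: (@Lsup_inter R _ V (fun v => [set x | v (geset X x) = 1]) M (- M)).
    * by exists v0.
    * by move=> v x y Vv xy /=; exact: vdn.
    * by move=> v x Vv; exact: Sub.
    * by move=> v Vv /=; apply: vT.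
  + by move=> x; case: (si x) => [[-> _]|[-> _]]; [right|left].
  + move=> x y xy /si1 hy; apply/si1 => v Vv; exact: (vdn v x y Vv xy (hy v Vv)).
  + by move=> x xM; apply/si1 => v Vv; exact: vT.
  + move=> x xM; case: (si x) => [[_ h]|[-> //]].
    by have := h v0 Vv0; rewrite vZ // => /esym/one0.
Qed.
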